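(* Consider the noisy Hegselmann–Krause model with heterogeneously prejudiced agents described in the context, with noise bound $\delta>0$ and $J_1-J_2>\epsilon+2R$, where $R=\frac{(1-\alpha)\epsilon+\delta}{\alpha}$. Suppose $\max_{i\in\mathcal{S}_1}|x_i(0)-J_1|\le R$ and $\max_{i\in\mathcal{S}_2}|x_i(0)-J_2|\le R$. If almost surely there is a finite (possibly random) time $T$ with $\max_{i\in\mathcal{S}_1}|x_i(T)-J_1|\le\frac{\delta}{\alpha}$, then almost surely $\limsup_{t\to\infty}\max_{i\in\mathcal{S}_1}|x_i(t)-J_1|\le\frac{\delta}{\alpha}$. Likewise, if almost surely there is a finite time $T$ with $\max_{i\in\mathcal{S}_2}|x_i(T)-J_2|\le\frac{\delta}{\alpha}$, then almost surely $\limsup_{t\to\infty}\max_{i\in\mathcal{S}_2}|x_i(t)-J_2|\le\frac{\delta}{\alpha}$.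
   Context: Agents $\mathcal{V}=\{1,\dots,n\}$ with opinions $x_i(t)\in[0,1]$, $t=0,1,2,\dots$. $\mathcal{V}=\mathcal{S}_1\cup\mathcal{S}_2$ with $\mathcal{S}_1\cap\mathcal{S}_2=\emptyset$; agents in $\mathcal{S}_k$ have prejudice value $J_k\in[0,1]$ ($k=1,2$). Confidence bound $\epsilon\in(0,1)$, attraction strength $\alpha\in(0,1]$. Neighbor set $\mathcal{N}_i(x(t))=\{j\in\mathcal{V}:|x_j(t)-x_i(t)|\le\epsilon\}$. For $i\in\mathcal{S}_k$, $x_i^*(t)=(1-\alpha)|\mathcal{N}_i(x(t))|^{-1}\sum_{j\in\mathcal{N}_i(x(t))}x_j(t)+\alpha J_k+\xi_i(t+1)$, and $x_i(t+1)$ equals $1$ if $x_i^*(t)>1$, $x_i^*(t)$ if $x_i^*(t)\in[0,1]$, $0$ if $x_i^*(t)<0$. The noises $\{\xi_i(t)\}_{i\in\mathcal{V},t\ge1}$ are i.i.d. with $E\xi_1(1)=0$, $E\xi_1(1)^2>0$ and $|\xi_1(1)|\le\delta$ almost surely. *)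

(* Defs.v *)
From Stdlib Require Import Reals Lra List.
Import ListNotations.
Open Scope R_scope.

(* Agents are the naturals 0..n-1; opinions at one time: y : nat -> R. *)

(* |N_i(y)|: number of j < n with |y j - y i| <= eps (always >= 1, i itself). *)
Definition nbr_count (y : nat -> R) (n i : nat) (eps : R) : R :=
  fold_right (fun j acc => (if Rle_dec (Rabs (y j - y i)) eps then 1 else 0) + acc)
             0 (seq 0 n).

Definition nbr_sum (y : nat -> R) (n i : nat) (eps : R) : R :=
  fold_right (fun j acc => (if Rle_dec (Rabs (y j - y i)) eps then y j else 0) + acc)
             0 (seq 0 n).

Definition nbr_avg (y : nat -> R) (n i : nat) (eps : R) : R :=
  nbr_sum y n i eps / nbr_count y n i eps.

Definition clip01 (z : R) : R := Rmax 0 (Rmin 1 z).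

(* grp i = true  <-> i in S_1 ;  grp i = false <-> i in S_2  (a partition of V). *)
Definition prejudice (grp : nat -> bool) (J1 J2 : R) (i : nat) : R :=
  if grp i then J1 else J2.

Definition HK_traj (n : nat) (grp : nat -> bool) (J1 J2 eps alpha : R)
    (xi : nat -> nat -> R) (x : nat -> nat -> R) : Prop :=
  forall t i, (i < n)%nat ->
    x (S t) i = clip01 ((1 - alpha) * nbr_avg (x t) n i eps
                        + alpha * prejudice grp J1 J2 i + xi (S t) i).

(* Abstract "almost surely": a family of null events that is an ideal
   (closed under subsets and finite unions), as the null sets of any
   probability measure are. *)
Record null_ideal (Omega : Type) (Null : (Omega -> Prop) -> Prop) : Prop := {
  null_mono : forall A B : Omega -> Prop,
      (forall w, A w -> B w) -> Null B -> Null A;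
  null_union : forall A B : Omega -> Prop,
      Null A -> Null B -> Null (fun w => A w \/ B w)
}.

Definition almost_surely {Omega : Type} (Null : (Omega -> Prop) -> Prop)
    (P : Omega -> Prop) : Prop := Null (fun w => ~ P w).

Definition group_dev_le (n : nat) (grp : nat -> bool) (b : bool)
    (y : nat -> R) (J c : R) : Prop :=
  forall i, (i < n)%nat -> grp i = b -> Rabs (y i - J) <= c.

(* limsup_{t->oo} max_{i in S_k} |x t i - J| <= c *)
Definition limsup_group_dev_le (n : nat) (grp : nat -> bool) (b : bool)
    (x : nat -> nat -> R) (J c : R) : Prop :=
  forall eta, 0 < eta -> exists T0 : nat, forall t, (T0 <= t)%nat ->
    group_dev_le n grp b (x t) J (c + eta).

(* Main.v *)
Require Import Defs.
From Stdlib Require Import Reals Lra Lia List Classical.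
Import ListNotations.
Open Scope R_scope.

Lemma abs_le_iff a b : Rabs a <= b <-> -b <= a <= b.
Proof. unfold Rabs; destruct (Rcase_abs a); split; intros; lra. Qed.

Lemma clip01_close z J : 0 <= J <= 1 -> Rabs (clip01 z - J) <= Rabs (z - J).
Proof.
  intros HJ. unfold clip01, Rmax, Rmin.
  destruct (Rle_dec 1 z); [destruct (Rle_dec 0 1)|destruct (Rle_dec 0 z)];
  unfold Rabs; repeat destruct Rcase_abs; lra.
Qed.

Definition Sf (y : nat -> R) (yi eps : R) (l : list nat) : R :=
  fold_right (fun j acc => (if Rle_dec (Rabs (y j - yi)) eps then y j else 0) + acc) 0 l.
Definition Cf (y : nat -> R) (yi eps : R) (l : list nat) : R :=
  fold_right (fun j acc => (if Rle_dec (Rabs (y j - yi)) eps then 1 else 0) + acc) 0 l.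

Lemma Cf_nonneg y yi eps l : 0 <= Cf y yi eps l.
Proof.
  induction l as [|a l IH]; simpl; [lra|].
  destruct (Rle_dec _ _); lra.
Qed.

Lemma Cf_ge1 y eps l i : 0 <= eps -> In i l -> 1 <= Cf y (y i) eps l.
Proof.
  intros He Hin. induction l as [|a l IH]; simpl in *; [contradiction|].
  destruct Hin as [<-|Hin].
  - destruct (Rle_dec _ _) as [h|h].
    + pose proof (Cf_nonneg y (y a) eps l). lra.
    + exfalso. apply h. replace (y a - y a) with 0 by ring. rewrite Rabs_R0. lra.
  - specialize (IH Hin). destruct (Rle_dec _ _); lra.
Qed.

Lemma fold_bound (y : nat -> R) (yi eps c r : R) (l : list nat) :
  0 <= r ->
  (forall j, In j l -> Rabs (y j - yi) <= eps -> Rabs (y j - c) <= r) ->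
  Rabs (Sf y yi eps l - c * Cf y yi eps l) <= r * Cf y yi eps l.
Proof.
  intros Hr H. induction l as [|a l IH]; simpl.
  - replace (0 - c * 0) with 0 by ring. rewrite Rabs_R0. lra.
  - assert (IH' : Rabs (Sf y yi eps l - c * Cf y yi eps l) <= r * Cf y yi eps l).
    { apply IH. intros j Hj. apply H. simpl; auto. }
    fold (Sf y yi eps l). fold (Cf y yi eps l).
    destruct (Rle_dec _ _) as [h|h].
    + replace (y a + Sf y yi eps l - c * (1 + Cf y yi eps l))
        with ((y a - c) + (Sf y yi eps l - c * Cf y yi eps l)) by ring.
      eapply Rle_trans; [apply Rabs_triang|].
      assert (Rabs (y a - c) <= r) by (apply H; simpl; auto). lra.
    + replace (0 + Sf y yi eps l - c * (0 + Cf y yi eps l))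
        with (Sf y yi eps l - c * Cf y yi eps l) by ring. lra.
Qed.

Lemma avg_bound y n i eps c r : (i < n)%nat -> 0 <= eps -> 0 <= r ->
  (forall j, (j < n)%nat -> Rabs (y j - y i) <= eps -> Rabs (y j - c) <= r) ->
  Rabs (nbr_avg y n i eps - c) <= r.
Proof.
  intros Hi He Hr H.
  unfold nbr_avg.
  change (nbr_sum y n i eps) with (Sf y (y i) eps (seq 0 n)).
  change (nbr_count y n i eps) with (Cf y (y i) eps (seq 0 n)).
  pose proof (fold_bound y (y i) eps c r (seq 0 n) Hr) as H1.
  assert (HC : 1 <= Cf y (y i) eps (seq 0 n)).
  { apply Cf_ge1; [lra|]. apply in_seq. lia. }
  set (S := Sf y (y i) eps (seq 0 n)) in *.
  set (C := Cf y (y i) eps (seq 0 n)) in *.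
  assert (H2 : Rabs (S - c * C) <= r * C).
  { apply H1. intros j Hj. apply in_seq in Hj. apply H; lia. }
  apply abs_le_iff in H2. apply abs_le_iff.
  replace (S / C - c) with ((S - c * C) / C) by (field; lra).
  split.
  - apply (Rmult_le_reg_r C); [lra|]. unfold Rdiv. rewrite Rmult_assoc, Rinv_l by lra. lra.
  - apply (Rmult_le_reg_r C); [lra|]. unfold Rdiv. rewrite Rmult_assoc, Rinv_l by lra. lra.
Qed.

Lemma step_bound a J xi alpha delta D : 0 < alpha <= 1 ->
  Rabs (a - J) <= D -> Rabs xi <= delta ->
  Rabs ((1 - alpha) * a + alpha * J + xi - J) <= (1 - alpha) * D + delta.
Proof.
  intros Ha H1 H2.
  replace ((1 - alpha) * a + alpha * J + xi - J) with ((1 - alpha) * (a - J) + xi) by ring.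
  eapply Rle_trans; [apply Rabs_triang|].
  rewrite Rabs_mult, (Rabs_pos_eq (1 - alpha)) by lra.
  assert ((1 - alpha) * Rabs (a - J) <= (1 - alpha) * D) by (apply Rmult_le_compat_l; lra).
  lra.
Qed.

Lemma invR n grp J1 J2 eps alpha delta (xi : nat -> nat -> R) x0 (x : nat -> nat -> R)
  (Heps : 0 < eps < 1) (Halpha : 0 < alpha <= 1)
  (HJ1 : 0 <= J1 <= 1) (HJ2 : 0 <= J2 <= 1) (Hdelta : 0 < delta)
  (Hinit : forall i, x 0%nat i = x0 i)
  (Hdyn : HK_traj n grp J1 J2 eps alpha xi x)
  (Hn : forall t i, (1 <= t)%nat -> (i < n)%nat -> Rabs (xi t i) <= delta)
  (H1init : group_dev_le n grp true x0 J1 (((1 - alpha) * eps + delta) / alpha))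
  (H2init : group_dev_le n grp false x0 J2 (((1 - alpha) * eps + delta) / alpha)) :
  forall t i, (i < n)%nat ->
    Rabs (x t i - prejudice grp J1 J2 i) <= ((1 - alpha) * eps + delta) / alpha.
Proof.
  set (R0 := ((1 - alpha) * eps + delta) / alpha).
  assert (Hkey : alpha * R0 = (1 - alpha) * eps + delta) by (unfold R0; field; lra).
  intro t; induction t as [|t IH]; intros i Hi.
  - rewrite Hinit. unfold prejudice. destruct (grp i) eqn:E.
    + apply H1init; auto.
    + apply H2init; auto.
  - rewrite (Hdyn t i Hi).
    assert (HJ : 0 <= prejudice grp J1 J2 i <= 1) by (unfold prejudice; destruct (grp i); lra).
    eapply Rle_trans; [apply clip01_close; exact HJ|].
    eapply Rle_trans; [apply step_bound with (D := R0 + eps); auto|].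
    + apply avg_bound; auto; try lra.
      * assert (0 <= (1 - alpha) * eps) by (apply Rmult_le_pos; lra).
        assert (0 <= R0) by (unfold R0; apply Rmult_le_pos; [lra| left; apply Rinv_0_lt_compat; lra]).
        lra.
      * intros j Hj Hji.
        replace (x t j - prejudice grp J1 J2 i)
          with ((x t j - x t i) + (x t i - prejudice grp J1 J2 i)) by ring.
        eapply Rle_trans; [apply Rabs_triang|].
        specialize (IH i Hi). lra.
    + apply Hn; lia.
    + nra.
Qed.

Lemma invD n grp J1 J2 eps alpha delta (xi : nat -> nat -> R) (x : nat -> nat -> R) (b : bool) T
  (Heps : 0 < eps < 1) (Halpha : 0 < alpha <= 1)
  (HJ1 : 0 <= J1 <= 1) (HJ2 : 0 <= J2 <= 1) (Hdelta : 0 < delta)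
  (Hdyn : HK_traj n grp J1 J2 eps alpha xi x)
  (Hn : forall t i, (1 <= t)%nat -> (i < n)%nat -> Rabs (xi t i) <= delta)
  (HJsep : J1 - J2 > eps + 2 * (((1 - alpha) * eps + delta) / alpha))
  (HR : forall t i, (i < n)%nat ->
    Rabs (x t i - prejudice grp J1 J2 i) <= ((1 - alpha) * eps + delta) / alpha)
  (HT : group_dev_le n grp b (x T) (if b then J1 else J2) (delta / alpha)) :
  forall k, group_dev_le n grp b (x (k + T)%nat) (if b then J1 else J2) (delta / alpha).
Proof.
  set (R0 := ((1 - alpha) * eps + delta) / alpha) in *.
  set (D := delta / alpha).
  assert (HkeyD : alpha * D = delta) by (unfold D; field; lra).
  assert (HD0 : 0 <= D) by (unfold D; apply Rmult_le_pos; [lra| left; apply Rinv_0_lt_compat; lra]).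
  set (Jb := if b then J1 else J2).
  assert (HJb : 0 <= Jb <= 1) by (unfold Jb; destruct b; lra).
  induction k as [|k IH]; [exact HT|].
  intros i Hi Hg. simpl. rewrite (Hdyn (k + T)%nat i Hi).
  assert (Hp : prejudice grp J1 J2 i = Jb) by (unfold prejudice, Jb; rewrite Hg; reflexivity).
  rewrite Hp.
  eapply Rle_trans; [apply clip01_close; exact HJb|].
  eapply Rle_trans; [apply step_bound with (D := D); auto|].
  - apply avg_bound; auto; try lra.
    intros j Hj Hji.
    destruct (Bool.bool_dec (grp j) b) as [Eg|Eg].
    + apply IH; auto.
    + exfalso.
      pose proof (HR (k + T)%nat i Hi) as Ri. pose proof (HR (k + T)%nat j Hj) as Rj.
      unfold prejudice in Ri, Rj. rewrite Hg in Ri.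
      destruct b; destruct (grp j); try congruence;
      apply abs_le_iff in Ri; apply abs_le_iff in Rj; apply abs_le_iff in Hji; lra.
  - apply Hn; lia.
  - nra.
Qed.

Theorem lemma4
  (Omega : Type) (Null : (Omega -> Prop) -> Prop) (HNull : null_ideal Omega Null)
  (n : nat) (grp : nat -> bool) (J1 J2 eps alpha delta : R)
  (Heps : 0 < eps < 1) (Halpha : 0 < alpha <= 1)
  (HJ1 : 0 <= J1 <= 1) (HJ2 : 0 <= J2 <= 1) (Hdelta : 0 < delta)
  (xi : Omega -> nat -> nat -> R) (x0 : nat -> R)
  (x : Omega -> nat -> nat -> R)
  (Hx0range : forall i, (i < n)%nat -> 0 <= x0 i <= 1)
  (Hinit : forall w i, x w 0%nat i = x0 i)
  (Hdyn : forall w, HK_traj n grp J1 J2 eps alpha (xi w) (x w))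
  (Hnoise : almost_surely Null (fun w => forall t i, (1 <= t)%nat -> (i < n)%nat ->
                                  Rabs (xi w t i) <= delta))
  (HJsep : J1 - J2 > eps + 2 * (((1 - alpha) * eps + delta) / alpha))
  (H1init : group_dev_le n grp true x0 J1 (((1 - alpha) * eps + delta) / alpha))
  (H2init : group_dev_le n grp false x0 J2 (((1 - alpha) * eps + delta) / alpha)) :
  (almost_surely Null (fun w => exists T : nat,
       group_dev_le n grp true (x w T) J1 (delta / alpha)) ->
   almost_surely Null (fun w =>
       limsup_group_dev_le n grp true (x w) J1 (delta / alpha)))
  /\
  (almost_surely Null (fun w => exists T : nat,
       group_dev_le n grp false (x w T) J2 (delta / alpha)) ->
   almost_surely Null (fun w =>
       limsup_group_dev_le n grp false (x w) J2 (delta / alpha))).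
Proof.
  assert (Hgen : forall b : bool,
    almost_surely Null (fun w => exists T : nat,
       group_dev_le n grp b (x w T) (if b then J1 else J2) (delta / alpha)) ->
    almost_surely Null (fun w =>
       limsup_group_dev_le n grp b (x w) (if b then J1 else J2) (delta / alpha))).
  { intros b HA. unfold almost_surely in *.
    eapply (null_mono _ _ HNull); [| exact (null_union _ _ HNull _ _ HA Hnoise)].
    intros w Hw. simpl in Hw.
    destruct (classic (forall t i, (1 <= t)%nat -> (i < n)%nat -> Rabs (xi w t i) <= delta))
      as [Hn|Hn]; [|right; exact Hn].
    destruct (classic (exists T : nat,
       group_dev_le n grp b (x w T) (if b then J1 else J2) (delta / alpha))) as [[T HT]|HT];
      [|left; exact HT].
    exfalso; apply Hw.
    pose proof (invR n grp J1 J2 eps alpha delta (xi w) x0 (x w) Heps Halpha HJ1 HJ2 Hdelta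
                  (Hinit w) (Hdyn w) Hn H1init H2init) as HR.
    pose proof (invD n grp J1 J2 eps alpha delta (xi w) (x w) b T Heps Halpha HJ1 HJ2 Hdelta
                  (Hdyn w) Hn HJsep HR HT) as HD.
    intros eta Heta. exists T. intros t Ht i Hi Hg.
    replace t with ((t - T) + T)%nat by lia.
    specialize (HD (t - T)%nat i Hi Hg). lra. }
  split; [exact (Hgen true) | exact (Hgen false)].
Qed.
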